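(* Let $\Delta=\mathrm{conv}\{0,\,e_1+e_2,\,e_1+e_3,\,e_2+e_3\}\subset\mathbb{R}^3$, and let $\alpha,\beta,\gamma$ be real numbers with $\tfrac12\le\alpha,\beta,\gamma<1$ and $\alpha+\beta+\gamma=2$. Let $$\Lambda=\mathrm{span}_{\mathbb{Z}}\left\{\begin{pmatrix}-\alpha\\ \beta\\ \gamma\end{pmatrix},\begin{pmatrix}\alpha\\ -\beta\\ \gamma\end{pmatrix},\begin{pmatrix}\alpha\\ \beta\\ -\gamma\end{pmatrix}\right\}.$$ Then $\Delta$ is lattice complete with respect to $\Lambda$.
   Context: $e_1,e_2,e_3$ are the standard basis vectors of $\mathbb{R}^3$. For a $3$-dimensional lattice $\Lambda$ (discrete subgroup spanning $\mathbb{R}^3$) and a convex body $C$ (compact convex, non-empty interior): a segment $[a,b]$ is a lattice segment if $b-a$ is parallel to a nonzero vector of $\Lambda$, with lattice length $|b-a|/|v|$ where $v$ generates $\Lambda\cap\mathrm{span}\{b-a\}$ and is a positive multiple of $b-a$; $\mathrm{diam}_\Lambda(C)$ is the maximum lattice length of a lattice segment in $C$; $C$ is lattice complete if no convex body $C'\supsetneq C$ has $\mathrm{diam}_\Lambda(C')=\mathrm{diam}_\Lambda(C)$. *)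

(* Defs.v *)
From Stdlib Require Import Reals ZArith.
Open Scope R_scope.

Definition vec3 : Type := (R * R * R)%type.
Definition mk3 (x y z : R) : vec3 := (x, y, z).
Definition vx (v : vec3) : R := fst (fst v).
Definition vy (v : vec3) : R := snd (fst v).
Definition vz (v : vec3) : R := snd v.

Definition vadd (u v : vec3) : vec3 := mk3 (vx u + vx v) (vy u + vy v) (vz u + vz v).
Definition vsub (u v : vec3) : vec3 := mk3 (vx u - vx v) (vy u - vy v) (vz u - vz v).
Definition vscale (t : R) (v : vec3) : vec3 := mk3 (t * vx v) (t * vy v) (t * vz v).
Definition vzero : vec3 := mk3 0 0 0.
Definition vnorm (v : vec3) : R := sqrt (vx v * vx v + vy v * vy v + vz v * vz v).
Definition vdist (u v : vec3) : R := vnorm (vsub u v).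

Definition e1 : vec3 := mk3 1 0 0.
Definition e2 : vec3 := mk3 0 1 0.
Definition e3 : vec3 := mk3 0 0 1.

Definition vset := vec3 -> Prop.

Definition convex (C : vset) : Prop :=
  forall x y t, C x -> C y -> 0 <= t <= 1 ->
    C (vadd (vscale (1 - t) x) (vscale t y)).
Definition closed_set (C : vset) : Prop :=
  forall x, (forall r, 0 < r -> exists y, C y /\ vdist x y < r) -> C x.
Definition bounded_set (C : vset) : Prop :=
  exists M, forall x, C x -> vnorm x <= M.
Definition has_interior_point (C : vset) : Prop :=
  exists x r, 0 < r /\ forall y, vdist x y < r -> C y.
(* convex body: compact (closed and bounded in R^3), convex, non-empty interior *)
Definition convex_body (C : vset) : Prop :=
  convex C /\ closed_set C /\ bounded_set C /\ has_interior_point C.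

Definition Zspan3 (u v w : vec3) : vset :=
  fun x => exists a b c : Z,
    x = vadd (vscale (IZR a) u) (vadd (vscale (IZR b) v) (vscale (IZR c) w)).

Definition primitive (L : vset) (v : vec3) : Prop :=
  L v /\ v <> vzero /\
  forall (s : R), L (vscale s v) -> exists k : Z, s = IZR k.

(* [a,b] is a lattice segment of lattice length t (a <> b):
   b - a = t v with v the positive generator of L ∩ span{b-a},
   so that t = |b-a|/|v|. *)
Definition lattice_seg_len (L : vset) (a b : vec3) (t : R) : Prop :=
  exists v, primitive L v /\ 0 < t /\ vsub b a = vscale t v.

(* d is the lattice diameter of C: the maximum lattice length of a lattice
   segment contained in C (C convex, so [a,b] ⊆ C iff a,b ∈ C). *)
Definition lattice_diam_is (L : vset) (C : vset) (d : R) : Prop :=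
  (exists a b, C a /\ C b /\ lattice_seg_len L a b d) /\
  (forall a b t, C a -> C b -> lattice_seg_len L a b t -> t <= d).

Definition lattice_complete (L : vset) (C : vset) : Prop :=
  forall C' : vset, convex_body C' ->
    (forall x, C x -> C' x) -> (exists x, C' x /\ ~ C x) ->
    ~ (exists d, lattice_diam_is L C d /\ lattice_diam_is L C' d).

Definition conv4 (p1 p2 p3 p4 : vec3) : vset :=
  fun x => exists l1 l2 l3 l4 : R,
    0 <= l1 /\ 0 <= l2 /\ 0 <= l3 /\ 0 <= l4 /\ l1 + l2 + l3 + l4 = 1 /\
    x = vadd (vscale l1 p1) (vadd (vscale l2 p2) (vadd (vscale l3 p3) (vscale l4 p4))).

Definition Delta3 : vset := conv4 vzero (vadd e1 e2) (vadd e1 e3) (vadd e2 e3).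

Definition Lam (al be ga : R) : vset :=
  Zspan3 (mk3 (- al) be ga) (mk3 al (- be) ga) (mk3 al be (- ga)).

(* Main.v *)
Require Import Defs.
From Stdlib Require Import Reals ZArith Lra Lia Psatz.
Open Scope R_scope.

Ltac vsimpl := unfold vadd, vsub, vscale, vzero, e1, e2, e3, mk3, vx, vy, vz in *; simpl in *.

Lemma vec_ext (u w : vec3) : vx u = vx w -> vy u = vy w -> vz u = vz w -> u = w.
Proof. destruct u as [[u1 u2] u3], w as [[w1 w2] w3]; vsimpl; intros; subst; reflexivity. Qed.

Definition phi0 (u : vec3) := 2 - (vx u + vy u + vz u).
Definition phi1 (u : vec3) := vx u + vy u - vz u.
Definition phi2 (u : vec3) := vx u - vy u + vz u.
Definition phi3 (u : vec3) := - vx u + vy u + vz u.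

Lemma Delta_of_phi y : 0 <= phi0 y -> 0 <= phi1 y -> 0 <= phi2 y -> 0 <= phi3 y -> Delta3 y.
Proof.
  unfold phi0, phi1, phi2, phi3; intros H0 H1 H2 H3.
  exists (phi0 y / 2), (phi1 y / 2), (phi2 y / 2), (phi3 y / 2).
  unfold phi0, phi1, phi2, phi3.
  repeat split; try lra.
  apply vec_ext; unfold Delta3; vsimpl; lra.
Qed.

Lemma Delta_comb lam u : 0 <= lam < 1 ->
  0 <= 2*(1-lam) - (vx u + vy u + vz u) -> 0 <= vx u + vy u - vz u ->
  0 <= vx u - vy u + vz u -> 0 <= - vx u + vy u + vz u ->
  Delta3 (vscale (/(1-lam)) u).
Proof.
  intros Hl H0 H1 H2 H3.
  assert (Hc : 0 < /(1-lam)) by (apply Rinv_0_lt_compat; lra).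
  destruct u as [[u1 u2] u3]; apply Delta_of_phi; unfold phi0, phi1, phi2, phi3; vsimpl.
  - replace (2 - (/ (1 - lam) * u1 + / (1 - lam) * u2 + / (1 - lam) * u3))
      with (/(1-lam) * (2*(1-lam) - (u1 + u2 + u3))) by (field; lra).
    apply Rmult_le_pos; lra.
  - replace (/ (1 - lam) * u1 + / (1 - lam) * u2 - / (1 - lam) * u3)
      with (/(1-lam) * (u1 + u2 - u3)) by ring. apply Rmult_le_pos; lra.
  - replace (/ (1 - lam) * u1 - / (1 - lam) * u2 + / (1 - lam) * u3)
      with (/(1-lam) * (u1 - u2 + u3)) by ring. apply Rmult_le_pos; lra.
  - replace (- (/ (1 - lam) * u1) + / (1 - lam) * u2 + / (1 - lam) * u3)
      with (/(1-lam) * (- u1 + u2 + u3)) by ring. apply Rmult_le_pos; lra.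
Qed.

Lemma exhibit (C' L : vset) (P v x : vec3) (t lam : R) :
  convex C' -> (forall y, Delta3 y -> C' y) -> C' x -> Delta3 P -> Defs.primitive L v ->
  1 < t -> 0 <= lam < 1 ->
  Delta3 (vscale (/(1-lam)) (vsub (vadd P (vscale t v)) (vscale lam x))) ->
  exists a b, C' a /\ C' b /\ lattice_seg_len L a b t.
Proof.
  intros Hc Hs Hx HP Hv Ht Hl Hy.
  exists P, (vadd (vscale (1-lam) (vscale (/(1-lam)) (vsub (vadd P (vscale t v)) (vscale lam x)))) (vscale lam x)).
  split; [auto|split].
  - apply Hc; auto; lra.
  - exists v; split; [exact Hv|split; [lra|]].
    apply vec_ext; vsimpl; field; lra.
Qed.

Lemma key_ineq (t w lam a mu M e : R) : e = t*w - lam*a -> 1 <= t -> 2*mu <= w -> 0 < mu ->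
  Rabs a <= M -> lam*M = mu -> 0 <= lam -> 0 <= e.
Proof.
  intros -> Ht Hw Hmu Ha HM Hl.
  assert (lam * a <= lam * M).
  { apply Rmult_le_compat_l; auto. apply Rle_trans with (Rabs a); auto. apply Rle_abs. }
  assert (w <= t*w) by nra.
  lra.
Qed.
Lemma Lam_coords al be ga w : Lam al be ga w -> exists p q r : Z,
  vx w = al*IZR p /\ vy w = be*IZR q /\ vz w = ga*IZR r /\
  (exists i j k, p = (-i+j+k)%Z /\ q = (i-j+k)%Z /\ r = (i+j-k)%Z).
Proof.
  intros [i [j [k ->]]].
  exists (-i+j+k)%Z, (i-j+k)%Z, (i+j-k)%Z.
  repeat (rewrite minus_IZR || rewrite plus_IZR || rewrite opp_IZR).
  vsimpl; split; [ring|split; [ring|split; [ring|]]].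
  exists i, j, k; auto.
Qed.

Lemma prim_gen al be ga v (s : R) : al <> 0 -> Lam al be ga v -> vx v = s*al ->
  (s = 1 \/ s = -1) -> v <> vzero -> Defs.primitive (Lam al be ga) v.
Proof.
  intros Hal Hv Hx Hs Hnz. split; [exact Hv|split; [exact Hnz|]].
  intros c Hc. destruct (Lam_coords _ _ _ _ Hc) as [p [q [r [Hp _]]]].
  assert (Hcx : vx (vscale c v) = c * vx v) by (destruct v as [[? ?] ?]; vsimpl; ring).
  rewrite Hcx, Hx in Hp.
  assert (E : c * s = IZR p).
  { apply (Rmult_eq_reg_r al); [|exact Hal]. lra. }
  destruct Hs as [-> | ->].
  - exists p. lra.
  - exists (-p)%Z. rewrite opp_IZR. lra.
Qed.

Lemma upper al be ga a b t v : 1/2 <= al < 1 -> 1/2 <= be < 1 -> 1/2 <= ga < 1 ->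
  al + be + ga = 2 -> Delta3 a -> Delta3 b -> Lam al be ga v -> v <> vzero -> 0 < t ->
  vsub b a = vscale t v -> t <= 1.
Proof.
  intros Ha Hb Hg Hsum [l1 [l2 [l3 [l4 [H1 [H2 [H3 [H4 [Hs ->]]]]]]]]]
    [m1 [m2 [m3 [m4 [G1 [G2 [G3 [G4 [Gs ->]]]]]]]]] Hv Hnz Ht Eab.
  destruct (Lam_coords _ _ _ _ Hv) as [p [q [r [Vx [Vy [Vz [i [j [k [Hp [Hq Hr]]]]]]]]]]].
  destruct v as [[v1 v2] v3].
  assert (Ex := f_equal vx Eab). assert (Ey := f_equal vy Eab). assert (Ez := f_equal vz Eab).
  vsimpl.
  assert (Cp : (2 <= p)%Z \/ (p <= -2)%Z \/ (p = -1 \/ p = 0 \/ p = 1)%Z) by lia.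
  assert (Cq : (2 <= q)%Z \/ (q <= -2)%Z \/ (q = -1 \/ q = 0 \/ q = 1)%Z) by lia.
  assert (Cr : (2 <= r)%Z \/ (r <= -2)%Z \/ (r = -1 \/ r = 0 \/ r = 1)%Z) by lia.
  destruct Cp as [C|[C|Cp]].
  { apply IZR_le in C. assert (1 <= al * IZR p) by nra. nra. }
  { apply IZR_le in C. assert (al * IZR p <= -1) by nra. nra. }
  destruct Cq as [C|[C|Cq]].
  { apply IZR_le in C. assert (1 <= be * IZR q) by nra. nra. }
  { apply IZR_le in C. assert (be * IZR q <= -1) by nra. nra. }
  destruct Cr as [C|[C|Cr]].
  { apply IZR_le in C. assert (1 <= ga * IZR r) by nra. nra. }
  { apply IZR_le in C. assert (ga * IZR r <= -1) by nra. nra. }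
  destruct Cp as [E1|[E1|E1]]; destruct Cq as [E2|[E2|E2]]; destruct Cr as [E3|[E3|E3]];
    try (exfalso; lia); rewrite E1 in Vx; rewrite E2 in Vy; rewrite E3 in Vz;
    subst v1 v2 v3.
  all: try (exfalso; apply Hnz; unfold vzero, mk3; f_equal; [f_equal|]; ring).
  all: nra.
Qed.

Ltac vsimplg := unfold vadd, vsub, vscale, vzero, e1, e2, e3, mk3, vx, vy, vz; simpl.

Lemma Delta_vert0 : Delta3 vzero.
Proof. exists 1, 0, 0, 0. repeat split; try lra. apply vec_ext; vsimpl; lra. Qed.
Lemma Delta_vert1 : Delta3 (mk3 1 1 0).
Proof. exists 0, 1, 0, 0. repeat split; try lra. apply vec_ext; vsimpl; lra. Qed.
Lemma Delta_vert2 : Delta3 (mk3 1 0 1).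
Proof. exists 0, 0, 1, 0. repeat split; try lra. apply vec_ext; vsimpl; lra. Qed.
Lemma Delta_vert3 : Delta3 (mk3 0 1 1).
Proof. exists 0, 0, 0, 1. repeat split; try lra. apply vec_ext; vsimpl; lra. Qed.

Lemma prim_v al be ga (s1 s2 s3 : R) (i j k : Z) : 0 < al ->
  mk3 (s1*al) (s2*be) (s3*ga) = vadd (vscale (IZR i) (mk3 (- al) be ga))
     (vadd (vscale (IZR j) (mk3 al (- be) ga)) (vscale (IZR k) (mk3 al be (- ga)))) ->
  (s1 = 1 \/ s1 = -1) -> Defs.primitive (Lam al be ga) (mk3 (s1*al) (s2*be) (s3*ga)).
Proof.
  intros Hal E Hs. apply prim_gen with (s := s1).
  - lra.
  - exists i, j, k. exact E.
  - vsimplg. ring.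
  - exact Hs.
  - intro Z0. apply (f_equal vx) in Z0. vsimpl. destruct Hs; subst; lra.
Qed.

Theorem proposition4p10 (al be ga : R) :
  1/2 <= al < 1 -> 1/2 <= be < 1 -> 1/2 <= ga < 1 -> al + be + ga = 2 ->
  lattice_complete (Lam al be ga) Delta3.
Proof.
  intros Ha Hb Hg Hs C' [Hconv _] Hsub [x [HxC HxD]]
    [d [[[a0 [b0 [Ha0 [Hb0 Hseg]]]] _] [_ Hbd]]].
  assert (Hd : d <= 1).
  { destruct Hseg as [v [[Lv [Vnz _]] [Htp Eq]]].
    eapply (upper al be ga a0 b0 d v); eauto. }
  pose (mu := (1-al)*(1-be)*(1-ga)).
  assert (Hmu : 0 < mu) by (unfold mu; apply Rmult_lt_0_compat; [apply Rmult_lt_0_compat|]; lra).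
  assert (Hab : 0 <= (1-al)*(1-be) <= 1/4) by nra.
  assert (Hag : 0 <= (1-al)*(1-ga) <= 1/4) by nra.
  assert (Hbg : 0 <= (1-be)*(1-ga) <= 1/4) by nra.
  assert (Mg : mu <= (1-ga)/4) by (unfold mu; nra).
  assert (Ma : mu <= (1-al)/4) by (unfold mu; nra).
  assert (Mb : mu <= (1-be)/4) by (unfold mu; nra).
  clearbody mu.
  pose (M := 1 + Rabs (phi0 x) + Rabs (phi1 x) + Rabs (phi2 x) + Rabs (phi3 x)).
  assert (A0 : Rabs (phi0 x) <= M) by (unfold M; pose proof (Rabs_pos (phi1 x)); pose proof (Rabs_pos (phi2 x)); pose proof (Rabs_pos (phi3 x)); lra).
  assert (A1 : Rabs (phi1 x) <= M) by (unfold M; pose proof (Rabs_pos (phi0 x)); pose proof (Rabs_pos (phi2 x)); pose proof (Rabs_pos (phi3 x)); lra).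
  assert (A2 : Rabs (phi2 x) <= M) by (unfold M; pose proof (Rabs_pos (phi1 x)); pose proof (Rabs_pos (phi0 x)); pose proof (Rabs_pos (phi3 x)); lra).
  assert (A3 : Rabs (phi3 x) <= M) by (unfold M; pose proof (Rabs_pos (phi1 x)); pose proof (Rabs_pos (phi2 x)); pose proof (Rabs_pos (phi0 x)); lra).
  assert (HM : 1 <= M) by (unfold M; pose proof (Rabs_pos (phi0 x)); pose proof (Rabs_pos (phi1 x)); pose proof (Rabs_pos (phi2 x)); pose proof (Rabs_pos (phi3 x)); lra).
  clearbody M.
  pose (lam := mu / M).
  assert (HlM : lam * M = mu) by (unfold lam; field; lra).
  assert (Hl0 : 0 < lam) by (unfold lam; apply Rdiv_lt_0_compat; lra).
  assert (Hl1 : lam <= mu) by (unfold lam; apply Rle_trans with (mu / 1); [apply Rmult_le_compat_l; [lra|]; apply Rinv_le_contravar; lra | lra]).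
  clearbody lam.
  assert (Hga : ga = 2 - al - be) by lra. subst ga.
  assert (Main : exists a b t, C' a /\ C' b /\ lattice_seg_len (Lam al be (2 - al - be)) a b t /\ 1 < t).
  {
    destruct (Rlt_dec (phi0 x) 0) as [N0|N0].
    { remember (1 + lam * (- phi0 x) / 2) as t eqn:Et.
      assert (Ht1 : 1 < t) by nra.
      destruct (exhibit C' (Lam al be (2-al-be)) vzero (mk3 (1*al) (1*be) (1*(2-al-be))) x t lam)
        as [a [b [Ca [Cb Hseg']]]]; auto.
      - apply Delta_vert0.
      - apply prim_v with (i := (1)%Z) (j := (1)%Z) (k := (1)%Z); [lra| |lra]. apply vec_ext; vsimplg; ring.
      - lra.
      - apply Delta_comb; [lra| | | |].
        + match goal with |- 0 <= ?e => assert (E : e = 0) by (rewrite Et; unfold phi0; vsimplg; field) end. lra.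
        + eapply (key_ineq t (2 - 2*(2-al-be)) lam (phi1 x) mu M); try lra.
          rewrite Et; unfold phi0, phi1; vsimplg; field.
        + eapply (key_ineq t (2 - 2*be) lam (phi2 x) mu M); try lra.
          rewrite Et; unfold phi0, phi2; vsimplg; field.
        + eapply (key_ineq t (2 - 2*al) lam (phi3 x) mu M); try lra.
          rewrite Et; unfold phi0, phi3; vsimplg; field.
      - exists a, b, t; auto. }
    destruct (Rlt_dec (phi1 x) 0) as [N1|N1].
    { remember (1 + lam * (- phi1 x) / 2) as t eqn:Et.
      assert (Ht1 : 1 < t) by nra.
      destruct (exhibit C' (Lam al be (2-al-be)) (mk3 1 1 0) (mk3 (-1*al) (-1*be) (1*(2-al-be))) x t lam)
        as [a [b [Ca [Cb Hseg']]]]; auto.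
      - apply Delta_vert1.
      - apply prim_v with (i := (0)%Z) (j := (0)%Z) (k := (-1)%Z); [lra| |lra]. apply vec_ext; vsimplg; ring.
      - lra.
      - apply Delta_comb; [lra| | | |].
        + eapply (key_ineq t (2 - 2*(2-al-be)) lam (phi0 x) mu M); try lra.
          rewrite Et; unfold phi1, phi0; vsimplg; field.
        + match goal with |- 0 <= ?e => assert (E : e = 0) by (rewrite Et; unfold phi1; vsimplg; field) end. lra.
        + eapply (key_ineq t (2 - 2*al) lam (phi2 x) mu M); try lra.
          rewrite Et; unfold phi1, phi2; vsimplg; field.
        + eapply (key_ineq t (2 - 2*be) lam (phi3 x) mu M); try lra.
          rewrite Et; unfold phi1, phi3; vsimplg; field.
      - exists a, b, t; auto. }
    destruct (Rlt_dec (phi2 x) 0) as [N2|N2].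
    { remember (1 + lam * (- phi2 x) / 2) as t eqn:Et.
      assert (Ht1 : 1 < t) by nra.
      destruct (exhibit C' (Lam al be (2-al-be)) (mk3 1 0 1) (mk3 (-1*al) (1*be) (-1*(2-al-be))) x t lam)
        as [a [b [Ca [Cb Hseg']]]]; auto.
      - apply Delta_vert2.
      - apply prim_v with (i := (0)%Z) (j := (-1)%Z) (k := (0)%Z); [lra| |lra]. apply vec_ext; vsimplg; ring.
      - lra.
      - apply Delta_comb; [lra| | | |].
        + eapply (key_ineq t (2 - 2*be) lam (phi0 x) mu M); try lra.
          rewrite Et; unfold phi2, phi0; vsimplg; field.
        + eapply (key_ineq t (2 - 2*al) lam (phi1 x) mu M); try lra.
          rewrite Et; unfold phi2, phi1; vsimplg; field.
        + match goal with |- 0 <= ?e => assert (E : e = 0) by (rewrite Et; unfold phi2; vsimplg; field) end. lra.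
        + eapply (key_ineq t (2 - 2*(2-al-be)) lam (phi3 x) mu M); try lra.
          rewrite Et; unfold phi2, phi3; vsimplg; field.
      - exists a, b, t; auto. }
    destruct (Rlt_dec (phi3 x) 0) as [N3|N3].
    { remember (1 + lam * (- phi3 x) / 2) as t eqn:Et.
      assert (Ht1 : 1 < t) by nra.
      destruct (exhibit C' (Lam al be (2-al-be)) (mk3 0 1 1) (mk3 (1*al) (-1*be) (-1*(2-al-be))) x t lam)
        as [a [b [Ca [Cb Hseg']]]]; auto.
      - apply Delta_vert3.
      - apply prim_v with (i := (-1)%Z) (j := (0)%Z) (k := (0)%Z); [lra| |lra]. apply vec_ext; vsimplg; ring.
      - lra.
      - apply Delta_comb; [lra| | | |].
        + eapply (key_ineq t (2 - 2*al) lam (phi0 x) mu M); try lra.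
          rewrite Et; unfold phi3, phi0; vsimplg; field.
        + eapply (key_ineq t (2 - 2*be) lam (phi1 x) mu M); try lra.
          rewrite Et; unfold phi3, phi1; vsimplg; field.
        + eapply (key_ineq t (2 - 2*(2-al-be)) lam (phi2 x) mu M); try lra.
          rewrite Et; unfold phi3, phi2; vsimplg; field.
        + match goal with |- 0 <= ?e => assert (E : e = 0) by (rewrite Et; unfold phi3; vsimplg; field) end. lra.
      - exists a, b, t; auto. }
    exfalso; apply HxD; apply Delta_of_phi; lra. }
  destruct Main as [a [b [t [Ca [Cb [Hst Ht]]]]]].
  assert (t <= d) by (apply (Hbd a b t); auto). lra.
Qed.
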